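(* Let $N\ge2$ and let $F$ be any marginal distribution as in the context. Define, for $r\in(0,1]$, $$L(r)=\int_{[0,r]}\frac{x^{\frac N{N-1}}}{r^{\frac1{N-1}}}\,dF(x)+r(1-F(r)),$$ and let $r^*$ be a maximizer of $L$ over $(0,1]$. Then the revenue guarantee of the second price auction with random reserve distributed according to $G_{r^*}(x)=(x/r^* )^{\frac1{N-1}}$, $x\in[0,r^*]$, is strictly greater than the revenue guarantee of the posted price mechanism, which equals $\max_{x\in[0,1]}x(1-F(x))$. That is, this auction robustly dominates the posted price mechanism.
   Context: A single indivisible good is sold to $N$ bidders with private values $v_i\in[0,1]$, each with the same marginal cdf $F$ whose support is $[0,1]$ (point masses allowed). $\Pi(F)$ is the set of probability measures on $[0,1]^N$ with all one-dimensional marginals equal to $F$. For a mechanism $(q,t)$ (allocation $q:[0,1]^N\to[0,1]^N$ with $\sum_iq_i\le1$, payments $t:[0,1]^N\to\mathbb{R}^N$) used with truthful bidding, its revenue guarantee is $\inf_{\pi\in\Pi(F)}\int\sum_it_i\,d\pi$. The second price auction with random reserve distributed as a cdf $G$: a reserve $\rho\sim G$ is drawn independently; a highest bidder (ties broken uniformly at random) wins if her bid is at least $\rho$ and pays $\max(\rho,\text{second highest bid})$; equivalently, a unique highest bidder with value $v_{(1)}$ receives the good with probability $G(v_{(1)})$ and pays $v_{(1)}G(v_{(1)})-\int_{v_{(2)}}^{v_{(1)}}G(s)\,ds$. The posted price mechanism posts a price and sells to a bidder willing to pay it; its revenue guarantee (the monopoly profit against the maximally positively correlated structure) is $\max_{x\in[0,1]}x(1-F(x))$.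 A mechanism $M_1$ robustly dominates $M_2$ if the revenue guarantee of $M_1$ is strictly greater than that of $M_2$ for every marginal distribution. *)

(* Defs.v *)
From HB Require Import structures.
From mathcomp Require Import all_boot all_order all_algebra.
From mathcomp Require Import all_classical all_reals all_analysis.
Set Implicit Arguments. Unset Strict Implicit. Unset Printing Implicit Defensive.
Import Order.TTheory GRing.Theory Num.Theory.
Local Open Scope classical_set_scope.
Local Open Scope ring_scope.

Section robust_auction.
Context (R : realType).

(* The marginal distribution F, given as a (Borel) probability measure mu on R;
   its cdf is F(x) = mu(]-oo, x]). *)
Definition cdf (mu : probability R R) (x : R) : R := fine (mu `]-oo, x]%classic).

(* "F has support [0,1]": all mass in [0,1], and every point of [0,1]
   lies in the (closed) support, i.e. each of its neighbourhoods has
   positive mass. *)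
Definition support01 (mu : probability R R) : Prop :=
  mu `[0, 1]%classic = 1%E /\
  forall x : R, 0 <= x <= 1 -> forall e : R, 0 < e -> (0 < mu (`](x - e)%R, (x + e)%R[%classic : set R))%E.

(* Pi(F): probability measures on [0,1]^N (here on R^N, the N-fold product
   with its product sigma-algebra) all of whose one-dimensional marginals
   equal F. *)
Definition PiF (N : nat) (mu : probability R R) : set (probability (N.-tuple R) R) :=
  [set pi | forall (i : 'I_N) (A : set R), measurable A ->
            pi ((fun v : N.-tuple R => tnth v i) @^-1` A) = mu A].

Definition revenue_guarantee (N : nat) (mu : probability R R)
    (rev : N.-tuple R -> R) : \bar R :=
  ereal_inf [set (\int[pi]_v (rev v)%:E)%E | pi in @PiF N mu].

(* highest and second highest bid (with multiplicity) of a profile in [0,1]^N *)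
Definition highest (N : nat) (v : N.-tuple R) : R :=
  \big[Num.max/0]_(i < N) tnth v i.
Definition second_highest (N : nat) (v : N.-tuple R) : R :=
  \big[Num.max/0]_(i < N) \big[Num.max/0]_(j < N | j != i)
     Num.min (tnth v i) (tnth v j).

Definition spa_random_reserve_revenue (N : nat) (G : R -> R)
    (v : N.-tuple R) : R :=
  highest v * G (highest v)
  - Rintegral lebesgue_measure `[second_highest v, highest v]%classic G.

Definition G_reserve (N : nat) (r : R) (x : R) : R :=
  if x < 0 then 0
  else if x <= r then powR (x / r) (1 / (N%:R - 1))
  else 1.

Definition L_fun (N : nat) (mu : probability R R) (r : R) : R :=
  Rintegral mu `[0, r]%classic
    (fun x => powR x (N%:R / (N%:R - 1)) / powR r (1 / (N%:R - 1)))
  + r * (1 - cdf mu r).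

Definition posted_price_guarantee (mu : probability R R) : R :=
  sup [set x * (1 - cdf mu x) | x in `[0, 1]%classic].

End robust_auction.

Arguments PiF {R} N mu.
Arguments revenue_guarantee {R} N mu rev.
Arguments highest {R} N v.
Arguments second_highest {R} N v.
Arguments spa_random_reserve_revenue {R} N G v.
Arguments G_reserve {R} N r x.
Arguments L_fun {R} N mu r.

(* Main.v *)
Require Import Defs.
From HB Require Import structures.
From mathcomp Require Import all_boot all_order all_algebra.
From mathcomp Require Import all_classical all_reals all_analysis.
From mathcomp Require Import ring lra.
From mathcomp Require Import measurable_realfun.
Import Order.TTheory GRing.Theory Num.Theory.
Import numFieldNormedType.Exports.
Local Open Scope classical_set_scope.
Local Open Scope ring_scope.
Set Implicit Arguments. Unset Strict Implicit. Unset Printing Implicit Defensive.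

Section NM.
Local Open Scope ereal_scope.
Lemma ge0_le_integral_nm (R : realType) d (T : measurableType d) (mu : {measure set T -> \bar R})
  (f g : T -> \bar R) :
  (forall x, 0 <= f x) -> (forall x, f x <= g x) -> \int[mu]_x f x <= \int[mu]_x g x.
Proof.
move=> f0 fg; have g0 x : 0 <= g x := le_trans (f0 x) (fg x).
rewrite !ge0_integralE //=; apply: le_ereal_sup => y [h hf <-]; exists h => //= x.
move: (hf x); rewrite /patch mem_set //= => /le_trans; apply; exact: fg.
Qed.
End NM.

Section Comb.
Variable R : realType.
Variable N : nat.

Lemma tuple_arg (v : N.-tuple R) (N0 : (0 < N)%N) :
  exists i0 : 'I_N, forall j, tnth v j <= tnth v i0.
Proof.
have [i0 _ H] := @arg_maxP _ _ _ (Ordinal N0) xpredT (fun i => tnth v i) isT.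
by exists i0 => j; apply: H.
Qed.

Lemma highest_ge (v : N.-tuple R) i : tnth v i <= highest N v.
Proof. exact: le_bigmax. Qed.

Lemma highest_ge0 (v : N.-tuple R) : 0 <= highest N v.
Proof. exact: bigmax_ge_id. Qed.

Lemma second_ge0 (v : N.-tuple R) : 0 <= second_highest N v.
Proof. exact: bigmax_ge_id. Qed.

Lemma second_le (v : N.-tuple R) : second_highest N v <= highest N v.
Proof.
apply: bigmax_le; first exact: highest_ge0.
move=> i _; apply: bigmax_le; first exact: highest_ge0.
move=> j _; rewrite ge_min; apply/orP; left; exact: highest_ge.
Qed.

Lemma second_ge (v : N.-tuple R) i0 j : (forall j, tnth v j <= tnth v i0) ->
  j != i0 -> tnth v j <= second_highest N v.
Proof.
move=> H ji.
rewrite /second_highest; apply: (le_trans _ (le_bigmax _ _ i0)).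
apply: le_trans; last exact: (@le_bigmax_cond _ _ _ 0 j (fun j0 => j0 != i0) (fun j0 => Num.min (tnth v i0) (tnth v j0)) ji).
by rewrite le_min H lexx.
Qed.

Lemma sum_bound (v : N.-tuple R) (f : R -> R) : (0 < N)%N ->
  {homo f : x y / x <= y} ->
  \sum_(i < N) f (tnth v i) <= f (highest N v) + (N%:R - 1) * f (second_highest N v).
Proof.
move=> N0 fnd; have [i0 H] := tuple_arg v N0.
rewrite (bigD1 i0) //=; apply: lerD; first exact/fnd/highest_ge.
apply: le_trans (_ : \sum_(j < N | j != i0) f (second_highest N v) <= _).
  by apply: ler_sum => j ji; apply/fnd/second_ge.
rewrite sumr_const cardC1 card_ord -[f _ *+ _]mulr_natl.
have -> : (N.-1)%:R = N%:R - 1 :> R by rewrite -{2}(prednK N0) -natr1 addrK.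
by [].
Qed.
End Comb.

Section S.
Variable R : realType.
Variables (N : nat) (r : R).
Hypothesis N2 : (2 <= N)%N.
Hypothesis r0 : 0 < r.
Hypothesis r1 : r <= 1.

Local Notation k := (N%:R - 1 : R).
Local Notation q := (1 / (N%:R - 1) : R).
Local Notation p := (N%:R / (N%:R - 1) : R).

Lemma k_ge1 : 1 <= k.
Proof. rewrite lerBrDr (_ : 1 + 1 = 2%:R) // ler_nat; by []. Qed.
Lemma k_gt0 : 0 < k. Proof. exact: lt_le_trans ltr01 k_ge1. Qed.
Lemma q_gt0 : 0 < q. Proof. by rewrite divr_gt0 // k_gt0. Qed.
Lemma p_eq : p = q + 1.
Proof. have := k_gt0; move=> hk. field. by rewrite gt_eqF. Qed.
Lemma p_gt0 : 0 < p. Proof. by rewrite p_eq addr_gt0 // q_gt0. Qed.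
Lemma N_gt0 : (0 : R) < N%:R. Proof. by rewrite ltr0n; case: N N2. Qed.

Definition Gs (x : R) := powR x q / powR r q.
Definition Fs (x : R) := powR x p * (k / N%:R / powR r q).

Lemma rq_gt0 : 0 < powR r q. Proof. exact: powR_gt0. Qed.

Lemma G_eq x : 0 <= x <= r -> G_reserve N r x = Gs x.
Proof.
case/andP=> x0 xr; rewrite /G_reserve ltNge x0 /= xr /Gs.
apply: (@mulIf _ (powR r q)); first by rewrite gt_eqF // rq_gt0.
rewrite divfK ?gt_eqF ?rq_gt0 // -powRM ?divr_ge0 ?(ltW r0) //.
by rewrite divfK // gt_eqF.
Qed.

Lemma Fs_derive x : 0 < x -> Fs^`()%classic x = Gs x.
Proof.
move=> x0; rewrite /Fs derive1Mr; last by apply: derivable_powR; rewrite in_itv /= x0.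
rewrite powR_derive1; last by rewrite in_itv /= x0.
rewrite /Gs p_eq addrK.
have := k_gt0; have := N_gt0; have := rq_gt0 => h1 h2 h3.
rewrite -p_eq. field. by rewrite !gt_eqF.
Qed.

Lemma powRc_derivable (e c x : R) : 0 < x -> derivable (fun y : R => powR y e * c) x 1.
Proof.
move=> x0; apply/derivable1_diffP.
apply: differentiableM; last exact: differentiable_cst.
by apply/derivable1_diffP; apply: derivable_powR; rewrite in_itv /= x0.
Qed.

Lemma powRc_cont (e c x : R) : 0 < x -> {for x, continuous (fun y : R => powR y e * c)}.
Proof. by move=> x0; apply: differentiable_continuous; apply/derivable1_diffP; exact: powRc_derivable. Qed.

Lemma powRc_LR (e c a b : R) : 0 < e -> 0 <= a -> a < b ->
  derivable_oo_LRcontinuous (fun y : R => powR y e * c) a b.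
Proof.
move=> e0 a0 ab; split.
- move=> x; rewrite in_itv /= => /andP[ax _]; apply: powRc_derivable.
  exact: le_lt_trans ax.
- move: a0; rewrite le_eqVlt => /predU1P[<-|a0].
    rewrite powR0 ?gt_eqF // mul0r.
    have h : (powR x e * c) @[x --> 0^'+] --> 0 * c by apply: cvgMl; exact: powR_cvg0.
    by rewrite mul0r in h.
  apply: cvg_at_right_filter; exact: (@powRc_cont e c a a0).
- by apply: cvg_at_left_filter; exact: (@powRc_cont e c b (le_lt_trans a0 ab)).
Qed.

Local Notation G := (G_reserve N r).

Lemma G_ge0 x : 0 <= G x.
Proof. rewrite /G_reserve; case: ifP => // _; case: ifP => // _; exact: powR_ge0. Qed.

Lemma G_le1 x : G x <= 1.
Proof.
rewrite /G_reserve; case: ifP => // x0; case: ifP => // xr.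
rewrite [leRHS](_ : 1 = powR 1 q); last by rewrite powR1.
apply: ge0_ler_powR.
- exact: ltW q_gt0.
- by rewrite nnegrE divr_ge0 // ?(ltW r0) // leNgt x0.
- by rewrite nnegrE.
- by rewrite ler_pdivrMr // mul1r.
Qed.

Lemma G_nd : {homo G : x y / x <= y}.
Proof.
move=> x y xy; rewrite /G_reserve.
case: ifP => x0; first by case: ifP => // _; case: ifP => // _; exact: powR_ge0.
have y0 : (y < 0) = false by apply/negbTE; rewrite -leNgt (le_trans _ xy) // leNgt x0.
rewrite y0; case: ifP => xr.
  case: ifP => yr; last first.
    have := G_le1 x; rewrite /G_reserve x0 xr //.
  apply: ge0_ler_powR.
  - exact: ltW q_gt0.
  - by rewrite nnegrE divr_ge0 // ?(ltW r0) // leNgt x0.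
  - by rewrite nnegrE divr_ge0 // ?(ltW r0) // leNgt y0.
  - by rewrite ler_pM2r // invr_gt0.
by have -> : (y <= r) = false by apply/negbTE; rewrite -ltNge (lt_le_trans _ xy) // ltNge xr.
Qed.

Lemma G_meas (D : set R) : measurable D -> measurable_fun D G.
Proof. by move=> mD; apply: nondecreasing_measurable => //; exact: G_nd. Qed.

Lemma intG_small a b : 0 <= a -> a <= b -> b <= r ->
  (\int[lebesgue_measure]_(x in `[a, b]) (G x)%:E = (Fs b - Fs a)%:E)%E.
Proof.
move=> a0; rewrite le_eqVlt => /predU1P[<-|ab] br.
  rewrite subrr set_itv1; apply: null_set_integral => //.
    by apply/measurable_EFinP; apply: G_meas.
  exact: lebesgue_measure_set1.
rewrite (@eq_integral _ _ _ (@lebesgue_measure R) _ (fun x => (Gs x)%:E)); last first.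
  move=> x; rewrite inE /= in_itv /= => /andP[ax xb]; congr (_%:E); apply: G_eq.
  by rewrite (le_trans a0 ax) (le_trans xb br).
rewrite EFinB; apply: continuous_FTC2 => //.
- apply: derivable_oo_LRcontinuous_within; exact: powRc_LR q_gt0 a0 ab.
- exact: powRc_LR p_gt0 a0 ab.
- move=> x; rewrite in_itv /= => /andP[ax _]; apply: Fs_derive; exact: le_lt_trans ax.
Qed.

Definition Phi (x : R) := if x <= r then Fs x else x - r / N%:R.

Lemma Fs_r : Fs r = r - r / N%:R.
Proof.
rewrite /Fs -mulr_powRB1 ?(ltW r0) ?p_gt0 // p_eq addrK.
have := rq_gt0; have := N_gt0 => h1 h2.
field; by rewrite !gt_eqF.
Qed.

Lemma intG a b : 0 <= a -> a <= b ->
  (\int[lebesgue_measure]_(x in `[a, b]) (G x)%:E = (Phi b - Phi a)%:E)%E.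
Proof.
move=> a0 ab; rewrite /Phi.
have [br|rb] := leP b r.
  by rewrite (le_trans ab br); exact: intG_small.
have [ar|ra] := leP a r.
  rewrite (@itv_bndbnd_setU _ _ _ (BRight r)) ?bnd_simp ?(ltW rb) //.
  rewrite ge0_integral_setU //=.
  - rewrite intG_small // (@eq_integral _ _ _ (@lebesgue_measure R) _ (fun _ => 1%E)); last first.
      move=> x; rewrite inE /= in_itv /= => /andP[rx _].
      by rewrite /G_reserve ltNge (le_trans a0 (le_trans ar (ltW rx))) /= leNgt rx.
    rewrite integral_cst //= mul1e lebesgue_measure_itv /= lte_fin rb -!EFinD.
    congr (_%:E); rewrite Fs_r; ring.
  - by apply: measurableT_comp => //; apply: G_meas; apply: measurableU; exact: measurable_itv.
  - by move=> x _; rewrite lee_fin G_ge0.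
  - by apply/disj_setPS => x [] /=; rewrite !in_itv /= => /andP[_ xr] /andP[rx _]; move: (lt_le_trans rx xr); rewrite ltxx.
have -> : (\int[lebesgue_measure]_(x in `[a, b]) (G x)%:E =
    \int[lebesgue_measure]_(x in `[a, b]) (cst 1%E) x)%E.
  apply: eq_integral => x; rewrite inE /= in_itv /= => /andP[ax _].
  by rewrite /G_reserve ltNge (le_trans a0 ax) /= leNgt (lt_le_trans ra ax).
rewrite integral_cst //= mul1e lebesgue_measure_itv /= lte_fin.
move: ab; rewrite le_eqVlt => /predU1P[->|ab]; first by rewrite ltxx subrr.
rewrite ab -EFinB; congr (_%:E); ring.
Qed.

Definition phi (x : R) := if x < 0 then 0 else if x <= r then powR x p / powR r q / N%:R
  else r / N%:R.

Lemma phi_ge0 x : 0 <= phi x.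
Proof.
rewrite /phi; case: ifP => // _; case: ifP => _.
  by rewrite !divr_ge0 ?powR_ge0 ?(ltW rq_gt0) ?(ltW N_gt0).
by rewrite divr_ge0 ?(ltW r0) ?(ltW N_gt0).
Qed.

Lemma rp_eq : powR r p = r * powR r q.
Proof. by rewrite -mulr_powRB1 ?(ltW r0) ?p_gt0 // p_eq addrK. Qed.

Lemma phi_nd : {homo phi : x y / x <= y}.
Proof.
move=> x y xy; rewrite /phi.
case: ifP => x0; first by have := phi_ge0 y; rewrite /phi.
have y0 : (y < 0) = false by apply/negbTE; rewrite -leNgt (le_trans _ xy) // leNgt x0.
rewrite y0; case: ifP => xr.
  have hN := N_gt0; have hq := rq_gt0.
  case: ifP => yr.
    rewrite ler_pM2r ?invr_gt0 // ler_pM2r ?invr_gt0 //.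
    apply: ge0_ler_powR => //; first exact: ltW p_gt0.
    - by rewrite nnegrE leNgt x0.
    - by rewrite nnegrE leNgt y0.
  rewrite ler_pM2r ?invr_gt0 // ler_pdivrMr // -rp_eq.
  apply: ge0_ler_powR => //; first exact: ltW p_gt0.
  - by rewrite nnegrE leNgt x0.
  - by rewrite nnegrE ltW.
by have -> : (y <= r) = false by apply/negbTE; rewrite -ltNge (lt_le_trans _ xy) // ltNge xr.
Qed.

Lemma phi_key1 h : 0 <= h -> h * G h - Phi h = phi h.
Proof.
move=> h0; rewrite /phi /Phi ltNge h0 /=.
have hN := N_gt0; have hq := rq_gt0; have hk := k_gt0.
case: ifP => hr.
  have e : h * powR h q = powR h p by rewrite -[RHS]mulr_powRB1 // ?p_gt0 // p_eq addrK.
  rewrite G_eq ?h0 ?hr // /Gs /Fs [h * _]mulrA e.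
  field; rewrite !gt_eqF //.
by rewrite /G_reserve ltNge h0 /= hr mulr1 opprB addrC subrK.
Qed.

Lemma phi_key2 s : 0 <= s -> k * phi s <= Phi s.
Proof.
move=> s0; rewrite /phi /Phi ltNge s0 /=.
have hN := N_gt0; have hq := rq_gt0; have hk := k_gt0.
case: ifP => sr.
  rewrite /Fs le_eqVlt; apply/orP; left; apply/eqP; field; rewrite !gt_eqF //.
rewrite (_ : k * (r / N%:R) = r - r / N%:R); last by field; rewrite gt_eqF.
by rewrite lerD2r ltW // ltNge sr.
Qed.

Lemma rev_ge (v : N.-tuple R) :
  \sum_(i < N) phi (tnth v i) <= spa_random_reserve_revenue N G v.
Proof.
have N0 : (0 < N)%N by case: N N2.
rewrite /spa_random_reserve_revenue /Rintegral intG ?second_ge0 ?second_le //=.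
apply: le_trans (sum_bound v N0 phi_nd) _.
rewrite opprD opprK addrA phi_key1 ?highest_ge0 // lerD2l.
exact/phi_key2/second_ge0.
Qed.

Variable mu : probability R R.

Lemma phi_meas : measurable_fun setT phi.
Proof. by apply: nondecreasing_measurable => //; exact: phi_nd. Qed.

Lemma int_phi_tnth (pi : probability (N.-tuple R) R) (i : 'I_N) : PiF N mu pi ->
  (\int[pi]_v (phi (tnth v i))%:E = \int[mu]_x (phi x)%:E)%E.
Proof.
move=> Hpi.
have mt := @measurable_tnth _ R N i.
have := @ge0_integral_pushforward _ _ _ _ R _ mt pi setT (fun x => (phi x)%:E) measurableT.
rewrite preimage_setT => <- //.
- apply: eq_measure_integral => A mA _; exact: Hpi.
- by apply/measurable_EFinP; exact: phi_meas.
- by move=> y _; rewrite lee_fin phi_ge0.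
Qed.

Lemma xp_eq x : 0 <= x -> powR x p = x * powR x q.
Proof. by move=> x0; rewrite -mulr_powRB1 ?p_gt0 // p_eq addrK. Qed.

Lemma f_meas x (D : set R) : measurable D -> measurable_fun D (fun t => powR t p / powR x q).
Proof.
move=> mD; apply: measurable_funM => //.
exact: measurable_funS (measurable_powR _).
Qed.

Lemma f_ge0 x t : 0 <= powR t p / powR x q.
Proof. by rewrite divr_ge0 // powR_ge0. Qed.

Lemma f_le1 x t : 0 < x <= 1 -> 0 <= t <= x -> powR t p / powR x q <= 1.
Proof.
move=> /andP[x0 x1] /andP[t0 tx].
have xq : 0 < powR x q by exact: powR_gt0.
rewrite ler_pdivrMr // [X in _ <= X]mul1r; apply: (le_trans (y := powR x p)).
  by apply: ge0_ler_powR; rewrite ?nnegrE ?(ltW p_gt0) ?(ltW x0).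
by rewrite xp_eq ?(ltW x0) //; apply: ler_piMl => //; exact: ltW.
Qed.

Lemma cE (x : R) : 0 < x <= 1 ->
  (Rintegral mu `[0, x] (fun t => powR t p / powR x q))%:E =
  (\int[mu]_(t in `[0%R, x]) (powR t p / powR x q)%:E)%E.
Proof.
move=> hx; rewrite /Rintegral fineK // ge0_fin_numE; last first.
  by apply: integral_ge0 => t _; rewrite lee_fin f_ge0.
apply: (le_lt_trans (y := (\int[mu]_(t in `[0%R, x]) (cst 1%E) t)%E)).
  apply: ge0_le_integral => //.
  - by move=> t _; rewrite lee_fin f_ge0.
  - by apply/measurable_EFinP; apply: f_meas.
  - by move=> t; rewrite /= in_itv /= => ht; rewrite lee_fin f_le1.
rewrite integral_cst // mul1e; apply: (le_lt_trans (probability_le1 _ _)) => //.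
exact: ltey.
Qed.

Lemma mu_gt (x : R) : mu `]x, +oo[%classic = (1 - Defs.cdf mu x)%:E.
Proof.
have h : (mu `]-oo, x]%classic + mu `]x, +oo[%classic = 1)%E.
  rewrite -measureU //.
  - rewrite itv_setU_setT; exact: probability_setT.
  - by rewrite -subset0 => y []; rewrite /= !in_itv /= andbT => yx xy; move: (lt_le_trans xy yx); rewrite ltxx.
rewrite /Defs.cdf; have fa : mu `]-oo, x]%classic \is a fin_num by exact: fin_num_measure.
have fb : mu `]x, +oo[%classic \is a fin_num by exact: fin_num_measure.
rewrite -(fineK fa) -(fineK fb) -EFinD in h; case: h => h.
by rewrite -(fineK fb); congr (_%:E); lra.
Qed.

Lemma int_phi : (((L_fun N mu r) / N%:R)%:E <= \int[mu]_x (phi x)%:E)%E.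
Proof.
have mA : measurable (`[0%R, r] : set R) by [].
have mB : measurable (`]r, +oo[ : set R) by [].
have mphiE : measurable_fun setT (fun x => (phi x)%:E) by apply/measurable_EFinP; exact: phi_meas.
apply: (le_trans _ (ge0_subset_integral mu (measurableU _ _ mA mB) measurableT mphiE _ (@subsetT _ _))); last first.
  by move=> x _; rewrite lee_fin phi_ge0.
rewrite ge0_integral_setU //; last 3 first.
- exact: measurable_funS mphiE.
- by move=> x _; rewrite lee_fin phi_ge0.
- apply/disj_setPS => y []; rewrite /= !in_itv /= andbT => /andP[_ yr] ry; move: (lt_le_trans ry yr); by rewrite ltxx.
have hN := N_gt0.
have -> : (\int[mu]_(x in `[0%R, r]) (phi x)%:E =
    \int[mu]_(x in `[0%R, r]) ((N%:R^-1)%:E * (powR x p / powR r q)%:E))%E.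
  apply: eq_integral => x; rewrite inE /= in_itv /= => /andP[x0 xr].
  by rewrite /phi ltNge x0 /= xr -EFinM mulrC.
have mf : measurable_fun `[0%R, r] (fun x => (powR x p / powR r q)%:E).
  by apply/measurable_EFinP; apply: f_meas.
rewrite (ge0_integralZl mu mA mf); last 2 first.
- by move=> x _; rewrite lee_fin f_ge0.
- by rewrite lee_fin invr_ge0 ltW.
have -> : (\int[mu]_(x in `]r, +oo[) (phi x)%:E =
    \int[mu]_(x in `]r, +oo[) (cst (r / N%:R)%:E) x)%E.
  apply: eq_integral => x; rewrite inE /= in_itv /= andbT => rx.
  by rewrite /phi ltNge (le_trans (ltW r0) (ltW rx)) /= leNgt rx.
have e : (mu : measure R R) `]r, +oo[%classic = (1 - Defs.cdf mu r)%:E by exact: mu_gt.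
rewrite integral_cst // -cE ?r0 ?r1 // e.
rewrite -!EFinM -EFinD lee_fin /L_fun.
rewrite le_eqVlt; apply/orP; left; apply/eqP; field; by rewrite gt_eqF.
Qed.

Lemma rev_lb (pi : probability (N.-tuple R) R) : PiF N mu pi ->
  ((L_fun N mu r)%:E <= \int[pi]_v (spa_random_reserve_revenue N G v)%:E)%E.
Proof.
move=> Hpi.
apply: (le_trans _ (@ge0_le_integral_nm R _ _ pi (fun v => (\sum_(i < N) phi (tnth v i))%:E) _ _ _)); last 2 first.
- by move=> v; rewrite lee_fin sumr_ge0 // => i _; exact: phi_ge0.
- by move=> v; rewrite lee_fin; exact: rev_ge.
under eq_integral do rewrite -sumEFin.
rewrite ge0_integral_sum //; last 2 first.
- move=> i; apply/measurable_EFinP; apply: measurableT_comp; first exact: phi_meas.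
  exact: measurable_tnth.
- by move=> i v _; rewrite lee_fin phi_ge0.
rewrite (eq_bigr (fun _ => \int[mu]_x (phi x)%:E)%E); last by move=> i _; exact: int_phi_tnth.
apply: (le_trans _ (_ : \sum_(i < N) ((L_fun N mu r / N%:R)%:E) <= _)%E); last first.
  by apply: lee_sum => i _; exact: int_phi.
rewrite sumEFin sumr_const card_ord lee_fin -[_ *+ N]mulr_natr divfK //.
by rewrite gt_eqF // N_gt0.
Qed.

Definition cfun (x : R) := Rintegral mu `[0%R, x] (fun t => powR t p / powR x q).
Definition mgap (d : R) := powR (d / 2) p * fine (mu `](d / 2), d[%classic).

Lemma cdf_ge0 x : 0 <= Defs.cdf mu x.
Proof. by rewrite /Defs.cdf fine_ge0. Qed.

Lemma cdf_le1 x : Defs.cdf mu x <= 1.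
Proof.
rewrite /Defs.cdf -lee_fin fineK ?fin_num_measure //.
exact: probability_le1.
Qed.

Lemma mgap_gt0 d : support01 mu -> 0 < d <= 1 -> 0 < mgap d.
Proof.
move=> [_ Hs] /andP[d0 d1]; rewrite /mgap mulr_gt0 ?powR_gt0 ?divr_gt0 //.
apply: fine_gt0; apply/andP; split; last first.
  by apply: (le_lt_trans (probability_le1 _ _)) => //; exact: ltey.
have := Hs (3 * d / 4) _ (d / 4) _.
rewrite (_ : 3 * d / 4 - d / 4 = d / 2); last by field.
rewrite (_ : 3 * d / 4 + d / 4 = d); last by field.
apply; last by rewrite divr_gt0.
by apply/andP; split; [rewrite divr_ge0 // mulr_ge0 // ltW | lra].
Qed.

Lemma cfun_ge d x : 0 < d <= 1 -> d <= x <= 1 -> mgap d <= cfun x.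
Proof.
move=> /andP[d0 d1] /andP[dx x1].
have x0 : 0 < x by exact: lt_le_trans dx.
rewrite -lee_fin /cfun cE ?x0 ?x1 //.
have mI : measurable (`](d / 2), d[%classic : set R) by [].
apply: (le_trans _ (ge0_subset_integral mu mI _ _ _ _)); last 4 first.
- by [].
- by apply/measurable_EFinP; apply: f_meas.
- by move=> t _; rewrite lee_fin f_ge0.
- move=> t; rewrite /= !in_itv /= => /andP[dt td]; apply/andP; split.
    by apply: ltW; apply: le_lt_trans dt; rewrite divr_ge0 // ltW.
  exact: le_trans (ltW td) dx.
pose I : set R := `](d / 2), d[%classic.
pose c : R := powR (d / 2) p.
have H : (\int[mu]_(t in I) (cst c%:E) t <= \int[mu]_(t in I) (powR t p / powR x q)%:E)%E.
  apply: ge0_le_integral => //.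
  - by move=> t _; rewrite lee_fin powR_ge0.
  - by apply/measurable_EFinP; apply: f_meas.
  - move=> t; rewrite /I /= in_itv /= => /andP[dt td]; rewrite lee_fin.
    have t0 : 0 <= t by apply: ltW; apply: le_lt_trans dt; rewrite divr_ge0 // ltW.
    have xq0 : 0 < powR x q by exact: powR_gt0.
    have xq1 : powR x q <= 1.
      rewrite [leRHS](_ : 1 = powR 1 q); last by rewrite powR1.
      by apply: ge0_ler_powR; rewrite ?nnegrE ?(ltW q_gt0) ?(ltW x0).
    apply: (le_trans (y := powR t p)).
      apply: ge0_ler_powR; rewrite ?nnegrE ?(ltW p_gt0) //; first by rewrite divr_ge0 // ltW.
      exact: ltW.
    by rewrite ler_pdivlMr // ler_piMr // powR_ge0.
apply: (le_trans _ H).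
rewrite integral_cst // /mgap EFinM fineK ?fin_num_measure //.
Qed.

Lemma main_in : support01 mu ->
  (forall x : R, 0 < x <= 1 -> L_fun N mu x <= L_fun N mu r) ->
  ((posted_price_guarantee mu)%:E <
   revenue_guarantee N mu (spa_random_reserve_revenue N G))%E.
Proof.
move=> Hsup Lmax.
set Ls := L_fun N mu r.
have L1 : mgap 1 <= Ls.
  apply: (le_trans (@cfun_ge 1 1 _ _)); rewrite ?lexx ?ltr01 //.
  apply: le_trans (Lmax 1 _); last by rewrite ltr01 lexx.
  rewrite [leRHS](_ : L_fun N mu 1 = cfun 1 + 1 * (1 - Defs.cdf mu 1)) //.
  by rewrite lerDl mul1r subr_ge0 cdf_le1.
have Lpos : 0 < Ls.
  by apply: lt_le_trans L1; apply: mgap_gt0 => //; rewrite ltr01 lexx.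
pose d := Num.min 1 (Ls / 2).
have d0 : 0 < d by rewrite lt_min ltr01 divr_gt0.
have d1 : d <= 1 by rewrite ge_min lexx.
have dL : d < Ls by rewrite gt_min; apply/orP; right; lra.
have m0 : 0 < mgap d by apply: mgap_gt0 => //; rewrite d0 d1.
have sup_le : posted_price_guarantee mu <= Num.max d (Ls - mgap d).
  apply: ge_sup.
    by exists (0 * (1 - Defs.cdf mu 0)); exists 0 => //=; rewrite in_itv /= lexx ler01.
  move=> y [x hx <-]; move: hx; rewrite /= in_itv /= => /andP[x0 x1].
  have [xd|dx] := ltP x d.
    apply: (le_trans (y := x)).
      by rewrite ler_piMr // lerBlDr lerDl cdf_ge0.
    by rewrite le_max; apply/orP; left; exact: ltW.
  rewrite le_max; apply/orP; right.
  have xpos : 0 < x by exact: lt_le_trans dx.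
  have := Lmax x; rewrite xpos x1 => /(_ isT).
  rewrite [L_fun N mu x](_ : _ = cfun x + x * (1 - Defs.cdf mu x)) // => hL.
  have := @cfun_ge d x; rewrite d0 d1 dx x1 => /(_ isT isT) hc.
  have hL2 : cfun x + x * (1 - Defs.cdf mu x) <= Ls := hL.
  lra.
have sup_lt : posted_price_guarantee mu < Ls.
  apply: le_lt_trans sup_le _; rewrite gt_max dL /=; lra.
apply: (lt_le_trans (y := Ls%:E)); first by rewrite lte_fin.
by apply: le_ereal_inf_tmp => _ [pi Hpi <-]; exact: rev_lb.
Qed.
End S.

Unset Implicit Arguments.
Set Strict Implicit.
Theorem theorem3 (R : realType) (N : nat) (mu : probability R R) (rstar : R) :
  (2 <= N)%N ->
  support01 mu ->
  0 < rstar <= 1 ->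
  (forall r : R, 0 < r <= 1 -> L_fun N mu r <= L_fun N mu rstar) ->
  ((posted_price_guarantee mu)%:E <
   revenue_guarantee N mu (spa_random_reserve_revenue N (G_reserve N rstar)))%E.
Proof.
move=> N2 Hs /andP[r0 r1] Lmax.
exact: (@main_in R N rstar N2 r0 r1 mu Hs Lmax).
Qed.
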